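(* Suppose there exist a language $g\in\mathbf{E}$ and $\iota>0$ such that, for every $n$, every Boolean circuit computing $g|_n$ has size at least $2^{\iota n}$. Then for every $\gamma>0$ there exists $c\in\mathbb{N}^+$ such that, as $n\to\infty$, $$\sup\left\{\frac{|f|_{\mathcal{C}}}{|f|_{\mathcal{U}^c}}: f\in H^n,\ |f|_{\mathcal{U}^c}<+\infty\right\}\in\Omega(n^{1+\gamma}).$$
   Context: Let $\mathcal{B}=\{0,1\}$, let $\mathcal{B}^*$ be the set of finite binary strings and $|h|$ the length of $h\in\mathcal{B}^*$. For $n\in\mathbb{N}^+$, $H^n$ is the set of all functions $\mathcal{B}^n\to\mathcal{B}$. An interpreter is a Turing machine computing a partial function $\varphi:\mathcal{B}^*\times\mathcal{B}^*\to\mathcal{B}\cup\{\bot\}$, where $\bot$ denotes non-halting (or invalid) output. For $f\in H^n$, $|f|_\varphi=\min\{|h|:\varphi(h,x)=f(x)\ \forall x\in\mathcal{B}^n\}$ ($+\infty$ if no such $h$). Turing machines have alphabet $\{0,1,b\}$ ($b$ blank), a finite state set containing an initial state and two final states accept/reject; the output is $1$ if halting in accept, $0$ if halting in reject, $\bot$ otherwise; multi-tape machines have read-only input tapes and read/write work tapes, and the transition function is a finite list of rules. $E(T)$ is a fixed prefix-free binary encoding of a machine $T$ listing its rules (of length at least 2 for every machine). For $c\in\mathbb{N}^+$, $\mathcal{U}^c$ is a time-bounded universal interpreter (a 2-input-tape, 3-work-tape machine): on $(p,x)$ with $n=|x|$, it checks within $n^c$ steps whether $p=E(T)u$ for a two-input-tape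 machine $T$ and $u\in\mathcal{B}^*$ (outputting $\bot$ if not, or if the check does not finish), then simulates $T$ on $(u,x)$ with an efficient universal simulation (Hennie–Stearns, overhead $O(t\log t)$ for $t$ simulated steps), devoting at most $n^c$ of its own steps to the simulation; it outputs $T$'s output if $T$ halts within this budget and $0$ otherwise. For fixed $p$ it runs in at most $\beta n^c$ steps for a constant $\beta$. In particular, if a Turing machine computes $g:\mathcal{B}^*\to\mathcal{B}$ in time $O(n^{c'})$ with $c'<c$, there is $h\in\mathcal{B}^*$ with $\mathcal{U}^c(h,x)=g(x)$ for all $x$ of sufficiently large length. A Boolean circuit on $n$ inputs is a DAG with a unique sink (output) whose sources are labelled by input indices in $\{1,\dots,n\}$ and whose other vertices (gates) are labelled AND, OR (two incoming edges) or NOT (one incoming edge); its size $|C|$ is its number of vertices. The circuit interpreter $\mathcal{C}$ reads a program $h=0^{\lceil\log_2 n\rceil}1\,[\text{binary expansion of } n]\,0^{|C|}1\,[\text{description of vertex } i]_{i=1}^{|C|}$, each vertex being described by its label and its parents/input index using $\max\{2\lceil\log_2|C|\rceil,\lceil\log_2 n\rceil\}$ bits beyond the label bits, so a circuit $C$ on $n$ inputs has encoding length $L(|C|,n)=2\lceil\log_2 n\rceil+2+|C|(3+\max\{2\lceil\log_2|C|\rceil,\lceil\log_2 n\rceil\})$; $\mathcal{C}(h,x)$ is the circuit's output on $x\in\mathcal{B}^n$, and $\bot$ if $h$ is malformed. Hence $|f|_{\mathcal{C}}=\min\{L(|C|,n): C \text{ computes } f\}$. A language is a subset $L\subseteq\mathcal{B}^*$,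 identified with its indicator function; $L|_n\in H^n$ is its restriction to inputs of length $n$. $\mathbf{E}$ is the class of languages decidable by a deterministic Turing machine in time $2^{O(n)}$. *)

(* Defs.v *)
From Stdlib Require Import Reals ZArith ClassicalEpsilon.
From mathcomp Require Import all_boot.

Set Implicit Arguments.
Unset Strict Implicit.
Unset Printing Implicit Defensive.

(* Minimum of a set of naturals, with None standing for +infinity.   *)
Definition nmin (P : nat -> Prop) : option nat :=
  match excluded_middle_informative (exists k, P k) with
  | left _ => Some (epsilon (inhabits 0) (fun k => P k /\ forall j, P j -> k <= j))
  | right _ => None
  end.

Inductive sym := S0 | S1 | Sb.
Inductive move := MoveL | MoveR | MoveS.

Definition mv (d : move) : Z :=
  match d with MoveL => (-1)%Z | MoveR => 1%Z | MoveS => 0%Z end.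

Record TM := mkTM {
  tm_Q : finType;
  tm_q0 : tm_Q;
  tm_acc : tm_Q;
  tm_rej : tm_Q;
  tm_acc_rej : tm_acc != tm_rej;
  tm_k : nat;
  tm_delta : tm_Q -> sym -> tm_k.-tuple sym ->
             tm_Q * move * tm_k.-tuple (sym * move)
}.

Record conf (M : TM) := mkConf {
  c_q : tm_Q M;
  c_ih : Z;
  c_tape : 'I_(tm_k M) -> Z -> sym;
  c_wh : 'I_(tm_k M) -> Z
}.

Definition bit (b : bool) : sym := if b then S1 else S0.

Definition read_input (x : seq bool) (z : Z) : sym :=
  if (Z.leb 0 z && Z.ltb z (Z.of_nat (size x)))%bool
  then bit (nth false x (Z.to_nat z)) else Sb.

Definition halted (M : TM) (q : tm_Q M) : bool := (q == tm_acc M) || (q == tm_rej M).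

Definition init_conf (M : TM) : conf M :=
  @mkConf M (tm_q0 M) 0%Z (fun _ _ => Sb) (fun _ => 0%Z).

Definition step (M : TM) (x : seq bool) (c : conf M) : conf M :=
  if halted (c_q c) then c else
  let rw := [tuple c_tape c i (c_wh c i) | i < tm_k M] in
  match tm_delta (c_q c) (read_input x (c_ih c)) rw with
  | (q', d, wr) =>
      @mkConf M q' (c_ih c + mv d)%Z
        (fun i z => if Z.eqb z (c_wh c i) then (tnth wr i).1 else c_tape c i z)
        (fun i => (c_wh c i + mv (tnth wr i).2)%Z)
  end.

Definition run (M : TM) (x : seq bool) (t : nat) : conf M :=
  ssrnat.iter t (step x) (init_conf M).

Definition decides_within (M : TM) (g : seq bool -> bool) (T : nat -> nat) : Prop :=
  forall x : seq bool, exists t, t <= T (size x) /\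
    c_q (run M x t) = (if g x then tm_acc M else tm_rej M).

Definition in_E (g : seq bool -> bool) : Prop :=
  exists (M : TM) (C a : nat), decides_within M g (fun n => C * 2 ^ (a * n)).

Definition computes_in_poly_time (M : TM) (g : seq bool -> bool) (c' : nat) : Prop :=
  exists C : nat, decides_within M g (fun n => C * n ^ c' + C).

(* Boolean circuits, as a topologically ordered list of vertices.     *)
(* Vertex i may only use vertices j < i as parents; input indices are *)
(* 0-based (k < n stands for the paper's index k+1 in {1..n}).        *)
Inductive gate := GIn of nat | GAnd of nat & nat | GOr of nat & nat | GNot of nat.

Definition gate_ok (n i : nat) (g : gate) : bool :=
  match g with
  | GIn k => k < n
  | GAnd a b | GOr a b => (a < i) && (b < i)
  | GNot a => a < i
  end.

Definition refs (i : nat) (g : gate) : bool :=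
  match g with
  | GIn _ => false
  | GAnd a b | GOr a b => (a == i) || (b == i)
  | GNot a => a == i
  end.

(* well-formed circuit on n inputs: nonempty DAG whose unique sink is the
   last vertex (every other vertex has an outgoing edge). *)
Definition circuit_wf (n : nat) (C : seq gate) : bool :=
  [&& 0 < size C,
      all (fun i => gate_ok n i (nth (GIn 0) C i)) (iota 0 (size C))
    & all (fun i => has (fun j => refs i (nth (GIn 0) C j)) (iota 0 (size C)))
          (iota 0 (size C).-1)].

Definition eval_gate (x vals : seq bool) (g : gate) : bool :=
  match g with
  | GIn k => nth false x k
  | GAnd a b => nth false vals a && nth false vals b
  | GOr a b => nth false vals a || nth false vals b
  | GNot a => ~~ nth false vals a
  end.

Definition circ_vals (C : seq gate) (x : seq bool) : seq bool :=
  foldl (fun vals g => rcons vals (eval_gate x vals g)) [::] C.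

Definition circ_out (C : seq gate) (x : seq bool) : bool := last false (circ_vals C x).

Definition circuit_computes (n : nat) (C : seq gate) (f : n.-tuple bool -> bool) : Prop :=
  circuit_wf n C /\ forall x : n.-tuple bool, circ_out C x = f x.

(* encoding length L(|C|, n); up_log 2 m = ceil(log2 m) for m >= 1 *)
Definition circ_len (s n : nat) : nat :=
  2 * up_log 2 n + 2 + s * (3 + maxn (2 * up_log 2 s) (up_log 2 n)).

Notation H n := {ffun n.-tuple bool -> bool}.

Definition compC (n : nat) (f : H n) : option nat :=
  nmin (fun k => exists C : seq gate, circuit_computes C f /\ k = circ_len (size C) n).

(* interpreters: partial functions, None = bottom *)
Definition interpreter := seq bool -> seq bool -> option bool.

Definition compI (phi : interpreter) (n : nat) (f : H n) : option nat :=
  nmin (fun k => exists h : seq bool, size h = k /\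
                   forall x : n.-tuple bool, phi h x = Some (f x)).

(* sup { |f|_C / |f|_phi : f in H^n, |f|_phi < +oo }  (a max over a finite set;
   all ratios are >= 0) *)
Definition sup_ratio (phi : interpreter) (n : nat) : R :=
  \big[Rmax/R0]_(f : H n | isSome (compI phi f))
     (Rdiv (INR (odflt 0%N (compC f))) (INR (odflt 0%N (compI phi f)))).

Definition restr (g : seq bool -> bool) (n : nat) : n.-tuple bool -> bool :=
  fun x => g x.

(* Main.v *)
Require Import Defs.
From HB Require Import structures.
From Stdlib Require Import Reals Lra Lia ZArith Classical ClassicalEpsilon.
From mathcomp Require Import all_boot zify.
Set Implicit Arguments.
Unset Strict Implicit.
Unset Printing Implicit Defensive.

Inductive ctrl (j : nat) := Scan | Inc | Back | Chk | Copy of 'I_j.+1 | Rw1 | Rw2.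
Arguments Scan {j}. Arguments Inc {j}. Arguments Back {j}. Arguments Chk {j}.
Arguments Copy {j}. Arguments Rw1 {j}. Arguments Rw2 {j}.
Definition c2s j (c : ctrl j) : 'I_6 + 'I_j.+1 :=
  match c with Scan => inl (@Ordinal 6 0 isT) | Inc => inl (@Ordinal 6 1 isT)
  | Back => inl (@Ordinal 6 2 isT) | Chk => inl (@Ordinal 6 3 isT)
  | Rw1 => inl (@Ordinal 6 4 isT) | Rw2 => inl (@Ordinal 6 5 isT) | Copy r => inr r end.
Definition s2c j (s : 'I_6 + 'I_j.+1) : ctrl j :=
  match s with inr r => Copy r | inl o => match val o with 0 => Scan | 1 => Inc | 2 => Back
   | 3 => Chk | 4 => Rw1 | _ => Rw2 end end.
Lemma c2sK j : cancel (@c2s j) (@s2c j).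
Proof. by case=> //= r; rewrite inordK. Qed.
HB.instance Definition _ j := Equality.copy (ctrl j) (can_type (@c2sK j)).
HB.instance Definition _ j := Finite.copy (ctrl j) (can_type (@c2sK j)).

Definition mark (w : nat) (z : Z) : sym :=
  if (Z.leb 0 z && Z.ltb z (Z.of_nat w))%bool then S1 else Sb.

Lemma step_nh (N : TM) x (c : conf N) q' d wr :
  halted (c_q c) = false ->
  tm_delta (c_q c) (read_input x (c_ih c)) [tuple c_tape c i (c_wh c i) | i < tm_k N] = (q', d, wr) ->
  step x c = @mkConf N q' (c_ih c + mv d)%Z
     (fun i z => if Z.eqb z (c_wh c i) then (tnth wr i).1 else c_tape c i z)
     (fun i => (c_wh c i + mv (tnth wr i).2)%Z).
Proof. by move=> Hh Hd; rewrite /step Hh /= Hd. Qed.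

Fixpoint incr (s : seq bool) : seq bool :=
  match s with [::] => [:: true] | false :: s' => true :: s' | true :: s' => false :: incr s' end.

Lemma nseqS_cat (p : nat) (s : seq bool) : nseq p false ++ false :: s = nseq p.+1 false ++ s.
Proof. by elim: p => //= p ->. Qed.

Lemma wsame' (f : Z -> sym) h s z : f h = s -> (if Z.eqb z h then s else f z) = f z.
Proof. by move=> <-; case: Z.eqb_spec => // ->. Qed.

Section Pad.
Variable M : TM.
Variable j : nat.
Notation k := (tm_k M).
Definition Q' : finType := (tm_Q M + ctrl j)%type.

Definition sel3 {T} (a b : T) (f : 'I_k -> T) (i : 'I_k.+2) : T :=
  match unlift ord0 i with None => a
  | Some i' => match unlift ord0 i' with None => b | Some i'' => f i'' end end.
Definition CT : 'I_k.+2 := ord0.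
Definition MT : 'I_k.+2 := lift ord0 ord0.
Definition MI (i : 'I_k) : 'I_k.+2 := lift ord0 (lift ord0 i).

Lemma sel3_CT T a b f : @sel3 T a b f CT = a.
Proof. by rewrite /sel3 /CT unlift_none. Qed.
Lemma sel3_MT T a b f : @sel3 T a b f MT = b.
Proof. by rewrite /sel3 /MT liftK unlift_none. Qed.
Lemma sel3_MI T a b f i : @sel3 T a b f (MI i) = f i.
Proof. by rewrite /sel3 /MI !liftK. Qed.

Definition ctrl_out (st : ctrl j) (s cs ms : sym) : Q' * move * (sym * move) * (sym * move) :=
  match st with
  | Scan => if s is Sb then (inr Chk, MoveS, (cs,MoveS), (ms,MoveS))
            else (inr Inc, MoveR, (cs,MoveS), (ms,MoveS))
  | Inc => if cs is S1 then (inr Inc, MoveS, (S0,MoveR), (ms,MoveS))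
           else (inr Back, MoveS, (S1,MoveL), (ms,MoveS))
  | Back => if cs is Sb then (inr Scan, MoveS, (cs,MoveR), (ms,MoveS))
            else (inr Back, MoveS, (cs,MoveL), (ms,MoveS))
  | Chk => if cs is Sb then (inr Rw1, MoveS, (cs,MoveS), (ms,MoveL))
           else (inr (Copy ord0), MoveS, (cs,MoveS), (ms,MoveS))
  | Copy r => if val r == j then (inr Chk, MoveS, (cs,MoveR), (ms,MoveS))
              else (inr (Copy (inord r.+1)), MoveS, (cs,MoveS), (S1,MoveR))
  | Rw1 => if ms is Sb then (inr Rw2, MoveL, (cs,MoveS), (ms,MoveR))
           else (inr Rw1, MoveS, (cs,MoveS), (ms,MoveL))
  | Rw2 => if s is Sb then (inl (tm_q0 M), MoveR, (cs,MoveS), (ms,MoveS))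
           else (inr Rw2, MoveL, (cs,MoveS), (ms,MoveS))
  end.

Definition delta' (q : Q') (s : sym) (t : k.+2.-tuple sym) : Q' * move * k.+2.-tuple (sym*move) :=
  let cs := tnth t CT in let ms := tnth t MT in
  let ws := [tuple tnth t (MI i) | i < k] in
  match q with
  | inl qm => let: (q2, d, wr) := tm_delta qm (if ms is S1 then s else Sb) ws in
             (inl q2, d, [tuple sel3 (cs, MoveS) (ms, d) (tnth wr) i | i < k.+2])
  | inr st => let: (q2, d, a, b) := ctrl_out st s cs ms in
             (q2, d, [tuple sel3 a b (fun i => (tnth ws i, MoveS)) i | i < k.+2])
  end.

Lemma accrej : (inl (tm_acc M) : Q') != inl (tm_rej M).
Proof. by rewrite inj_eq; [exact: tm_acc_rej | exact: inl_inj]. Qed.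

Definition Mp : TM := @mkTM Q' (inr Scan) (inl (tm_acc M)) (inl (tm_rej M)) accrej k.+2 delta'.

Lemma ctrl_step x (c : conf Mp) st q2 d a b :
  c_q c = inr st ->
  ctrl_out st (read_input x (c_ih c)) (c_tape c CT (c_wh c CT)) (c_tape c MT (c_wh c MT))
    = (q2, d, a, b) ->
  let c2 := step x c in
  c_q c2 = q2 /\ c_ih c2 = (c_ih c + mv d)%Z /\
      (forall z, c_tape c2 CT z = if Z.eqb z (c_wh c CT) then a.1 else c_tape c CT z) /\
      c_wh c2 CT = (c_wh c CT + mv a.2)%Z /\
      (forall z, c_tape c2 MT z = if Z.eqb z (c_wh c MT) then b.1 else c_tape c MT z) /\
      c_wh c2 MT = (c_wh c MT + mv b.2)%Z /\
      (forall i, c_wh c2 (MI i) = c_wh c (MI i) /\ forall z, c_tape c2 (MI i) z = c_tape c (MI i) z).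
Proof.
move=> Hq Ho /=.
set T := [tuple c_tape c i (c_wh c i) | i < k.+2].
rewrite (@step_nh Mp x c q2 d [tuple sel3 a b (fun i => (tnth [tuple tnth T (MI i) | i < k] i, MoveS)) i | i < k.+2]).
- rewrite /= !tnth_mktuple sel3_CT sel3_MT; do 6 (split; [done|]); move=> i; rewrite !tnth_mktuple !sel3_MI /=.
  split; first by rewrite Z.add_0_r.
  by move=> z; rewrite !tnth_mktuple; case: Z.eqb_spec => // ->.
- by rewrite Hq.
by rewrite Hq /= /delta' -/T !tnth_mktuple Ho.
Qed.

Lemma wsame (f : Z -> sym) h z : (if Z.eqb z h then f h else f z) = f z.
Proof. by case: Z.eqb_spec => // ->. Qed.

Lemma readN (bs : seq bool) t : read_input bs (Z.of_nat t) = if t < size bs then bit (nth false bs t) else Sb.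
Proof.
rewrite /read_input Nat2Z.id.
have -> : Z.leb 0 (Z.of_nat t) = true by apply/Z.leb_le; lia.
by case: Z.ltb_spec => H; case: ltnP => H2 //; lia.
Qed.
Lemma read_neg (bs : seq bool) z : (z < 0)%Z -> read_input bs z = Sb.
Proof. by move=> H; rewrite /read_input; case: Z.leb_spec => //; lia. Qed.
Lemma markN w t : mark w (Z.of_nat t) = if t < w then S1 else Sb.
Proof.
rewrite /mark.
have -> : Z.leb 0 (Z.of_nat t) = true by apply/Z.leb_le; lia.
by case: Z.ltb_spec => H; case: ltnP => H2 //; lia.
Qed.
Lemma mark_neg w z : (z < 0)%Z -> mark w z = Sb.
Proof. by move=> H; rewrite /mark; case: Z.leb_spec => //; lia. Qed.
Lemma Zcases z : (z < 0)%Z \/ exists t, z = Z.of_nat t.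
Proof. case: (Z.ltb_spec z 0) => H; [by left | right; exists (Z.to_nat z); lia]. Qed.

Lemma read_upd bs1 s b p : size bs1 = p -> forall z,
  (if Z.eqb z (Z.of_nat p) then bit b else read_input (bs1 ++ s) z) = read_input (bs1 ++ b :: behead s) z.
Proof.
move=> Hs z; case: (Zcases z) => [Hz|[t ->]].
  by rewrite !read_neg //; case: Z.eqb_spec => //; lia.
rewrite !readN !size_cat /= Hs.
case: Z.eqb_spec => [/Nat2Z.inj ->|Hne].
  by rewrite nth_cat Hs ltnn subnn addnS ltnS leq_addr.
rewrite !nth_cat Hs.
case: (ltnP t p) => Htp.
  by rewrite !(leq_trans Htp (leq_addr _ _)).
have Hpt : p < t by rewrite ltn_neqAle Htp andbT; apply/eqP=> E; apply: Hne; rewrite E.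
case: s => [|b0 s'] /=.
  by rewrite addn0 ltnNge ltnW // addn1 ltnS leqNgt Hpt.
by rewrite -(subnSK Hpt) /= addnS.
Qed.

Lemma mark_upd w z : (if Z.eqb z (Z.of_nat w) then S1 else mark w z) = mark w.+1 z.
Proof.
case: (Zcases z) => [Hz|[t ->]].
  by rewrite !mark_neg //; case: Z.eqb_spec => //; lia.
rewrite !markN; case: Z.eqb_spec => [/Nat2Z.inj ->|Hne]; first by rewrite ltnSn.
by rewrite ltnS (leq_eqVlt t); case: eqP => // E; case: Hne; rewrite E.
Qed.

Definition P1 (c : conf Mp) (q : Q') (i : Z) (bs : seq bool) (ph : Z) (w : nat) (mh : Z) :=
  c_q c = q /\ c_ih c = i /\ (forall z, c_tape c CT z = read_input bs z) /\ c_wh c CT = ph /\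
  (forall z, c_tape c MT z = mark w z) /\ c_wh c MT = mh /\
  (forall i, c_wh c (MI i) = 0%Z /\ forall z, c_tape c (MI i) z = Sb).

Lemma P1_step x c st i bs ph w mh q2 d a b i' bs' ph' w' mh' :
  P1 c (inr st) i bs ph w mh ->
  ctrl_out st (read_input x i) (read_input bs ph) (mark w mh) = (q2, d, a, b) ->
  i' = (i + mv d)%Z -> ph' = (ph + mv a.2)%Z -> mh' = (mh + mv b.2)%Z ->
  (forall z, (if Z.eqb z ph then a.1 else read_input bs z) = read_input bs' z) ->
  (forall z, (if Z.eqb z mh then b.1 else mark w z) = mark w' z) ->
  P1 (step x c) q2 i' bs' ph' w' mh'.
Proof.
move=> [Hq [Hi [HC [HCh [HM [HMh Hcl]]]]]] Ho -> -> -> E1 E2.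
have Ho' : ctrl_out st (read_input x (c_ih c)) (c_tape c CT (c_wh c CT)) (c_tape c MT (c_wh c MT)) = (q2, d, a, b).
  by rewrite Hi HCh HMh HC HM.
have [S1' [S2 [S3 [S4 [S5 [S6 S7]]]]]] := ctrl_step Hq Ho'.
split=> //; split; first by rewrite S2 Hi.
split; first by move=> z; rewrite S3 HCh HC E1.
split; first by rewrite S4 HCh.
split; first by move=> z; rewrite S5 HMh HM E2.
split; first by rewrite S6 HMh.
by move=> i0; have [H1 H2] := S7 i0; have [H3 H4] := Hcl i0; split; [rewrite H1|move=> z; rewrite H2].
Qed.

Ltac fin := try (by move=> z; apply: wsame'); try (by rewrite /=; lia).

Lemma L_back x p : forall bs i w mh c, p <= size bs ->
  P1 c (inr Back) i bs (Z.of_nat p - 1) w mh -> P1 (iter p.+1 (step x) c) (inr Scan) i bs 0 w mh.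
Proof.
elim: p => [|p IH] bs i w mh c Hp H.
  have Hr : read_input bs (Z.of_nat 0 - 1) = Sb by apply: read_neg; lia.
  apply: (P1_step H); first by rewrite Hr.
  - by rewrite /= Z.add_0_r.
  - by [].
  - by rewrite Z.add_0_r.
  - by move=> z; apply: wsame'.
  - by move=> z; apply: wsame'.
rewrite iterSr; apply: IH; first exact: ltnW.
have E : (Z.of_nat p.+1 - 1 = Z.of_nat p)%Z by lia.
rewrite E in H.
have Hr : read_input bs (Z.of_nat p) = bit (nth false bs p) by rewrite readN Hp.
case: (nth false bs p) Hr => Hr; (apply: (P1_step H); first by rewrite Hr); fin.
Qed.

Lemma size_incr s : size (incr s) <= (size s).+1.
Proof. by elim: s => //= [[]] s IH //=; rewrite ltnS. Qed.

Lemma L_inc x s : forall p i w mh c, P1 c (inr Inc) i (nseq p false ++ s) (Z.of_nat p) w mh ->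
  exists t, t <= 2 * size s + p + 3 /\ P1 (iter t (step x) c) (inr Scan) i (nseq p false ++ incr s) 0 w mh.
Proof.
elim: s => [|b s IH] p i w mh c H.
  have Hr : read_input (nseq p false ++ [::]) (Z.of_nat p) = Sb by rewrite readN cats0 size_nseq ltnn.
  exists p.+2; split; first by lia.
  rewrite iterSr; apply: L_back; first by rewrite size_cat size_nseq addn1.
  apply: (P1_step H); first by rewrite Hr.
  - by rewrite /= Z.add_0_r.
  - by rewrite /=; lia.
  - by rewrite Z.add_0_r.
  - by move=> z; exact: (@read_upd _ [::] true p (size_nseq _ _) z).
  - by move=> z; apply: wsame'.
have Hr : read_input (nseq p false ++ b :: s) (Z.of_nat p) = bit b.
  by rewrite readN size_cat size_nseq nth_cat size_nseq ltnn subnn /= addnS ltnS leq_addr.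
case: b H Hr => H Hr.
  have H' : P1 (step x c) (inr Inc) i (nseq p.+1 false ++ s) (Z.of_nat p.+1) w mh.
    apply: (P1_step H); first by rewrite Hr.
    - by rewrite /= Z.add_0_r.
    - by rewrite /=; lia.
    - by rewrite Z.add_0_r.
    - by move=> z; rewrite -nseqS_cat; exact: (@read_upd _ (true :: s) false p (size_nseq _ _) z).
    - by move=> z; apply: wsame'.
  have [t [Ht H2]] := IH _ _ _ _ _ H'.
  exists t.+1; split; first by rewrite /=; lia.
  by rewrite iterSr /= nseqS_cat.
exists p.+2; split; first by lia.
rewrite iterSr; apply: L_back; first by rewrite size_cat size_nseq /= leq_addr.
apply: (P1_step H); first by rewrite Hr.
- by rewrite /= Z.add_0_r.
- by rewrite /=; lia.
- by rewrite Z.add_0_r.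
- by move=> z; exact: (@read_upd _ (false :: s) true p (size_nseq _ _) z).
- by move=> z; apply: wsame'.
Qed.

Lemma size_iter_incr i : size (iter i incr [::]) <= i.
Proof. by elim: i => //= i IH; apply: leq_trans (size_incr _) _; rewrite ltnS. Qed.

Lemma L_scan x r : forall i c, i + r = size x ->
  P1 c (inr Scan) (Z.of_nat i) (iter i incr [::]) 0 0 0 ->
  exists t, t <= r * (2 * size x + 7) + 1 /\
    P1 (iter t (step x) c) (inr Chk) (Z.of_nat (size x)) (iter (size x) incr [::]) 0 0 0.
Proof.
elim: r => [|r IH] i c Hi H.
  rewrite addn0 in Hi; subst i.
  have Hr : read_input x (Z.of_nat (size x)) = Sb by rewrite readN ltnn.
  exists 1; split => //.
  apply: (P1_step H); first by rewrite Hr.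
  - by rewrite /= Z.add_0_r.
  - by [].
  - by [].
  - by move=> z; apply: wsame'.
  - by move=> z; apply: wsame'.
have Hlt : i < size x by rewrite -Hi addnS ltnS leq_addr.
have Hr : read_input x (Z.of_nat i) = bit (nth false x i) by rewrite readN Hlt.
have H1 : P1 (step x c) (inr Inc) (Z.of_nat i.+1) (nseq 0 false ++ iter i incr [::]) 0 0 0.
  by case: (nth false x i) Hr => Hr; (apply: (P1_step H); first by rewrite Hr); fin.
have [t1 [Ht1 H2]] := L_inc x H1.
have Hi' : i.+1 + r = size x by rewrite addSnnS.
have [t2 [Ht2 H3]] := IH i.+1 _ Hi' H2.
exists (t2 + (t1 + 1)); split; last by rewrite !iterD.
have := size_iter_incr i; lia.
Qed.

Lemma L_copyr x u : forall r (q : 'I_j.+1) p bs i c, r + u = j -> val q = r ->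
  P1 c (inr (Copy q)) i bs (Z.of_nat p) (j * p + r) (Z.of_nat (j * p + r)) ->
  P1 (iter u.+1 (step x) c) (inr Chk) i bs (Z.of_nat p.+1) (j * p.+1) (Z.of_nat (j * p.+1)).
Proof.
elim: u => [|u IH] r q p bs i c Hr Hq H.
  rewrite addn0 in Hr; rewrite Hr in H Hq.
  have Ew : j * p + j = j * p.+1 by rewrite mulnS addnC.
  rewrite Ew in H.
  have Hqj : (nat_of_ord q == j) = true by rewrite Hq eqxx.
  apply: (P1_step H); first by rewrite /= Hqj.
  all: fin.
have Hqj : (nat_of_ord q == j) = false by rewrite Hq -Hr -{1}(addn0 r) eqn_add2l.
have Hrj : r.+1 < j.+1 by rewrite -Hr ltnS addnS ltnS leq_addr.
have H' : P1 (step x c) (inr (Copy (inord r.+1))) i bs (Z.of_nat p) (j * p + r.+1) (Z.of_nat (j * p + r.+1)).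
  apply: (P1_step H); first by rewrite /= Hqj Hq.
  all: fin.
  by move=> z; rewrite addnS; exact: mark_upd.
rewrite iterSr; apply: (IH r.+1 (inord r.+1)) H'.
all: try by rewrite addSnnS.
exact: inordK.
Qed.

Lemma L_copy x u : forall p bs i c, p + u = size bs ->
  P1 c (inr Chk) i bs (Z.of_nat p) (j * p) (Z.of_nat (j * p)) ->
  P1 (iter (u * (j + 2)).+1 (step x) c) (inr Rw1) i bs (Z.of_nat (size bs)) (j * size bs)
     (Z.of_nat (j * size bs) - 1).
Proof.
elim: u => [|u IH] p bs i c Hp H.
  rewrite addn0 in Hp; subst p.
  have Hr : read_input bs (Z.of_nat (size bs)) = Sb by rewrite readN ltnn.
  apply: (P1_step H); first by rewrite Hr.
  all: fin.
have Hlt : p < size bs by rewrite -Hp addnS ltnS leq_addr.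
have Hr : read_input bs (Z.of_nat p) = bit (nth false bs p) by rewrite readN Hlt.
have H1 : P1 (step x c) (inr (Copy ord0)) i bs (Z.of_nat p) (j * p + 0) (Z.of_nat (j * p + 0)).
  rewrite addn0.
  by case: (nth false bs p) Hr => Hr; (apply: (P1_step H); first by rewrite Hr); fin.
have H2 := L_copyr x (add0n j) (erefl (0 : nat) : val (ord0 : 'I_j.+1) = 0) H1.
have E : (u.+1 * (j + 2)).+1 = (u * (j + 2)).+1 + (j.+1 + 1) by rewrite mulSn; lia.
rewrite E !iterD; apply: IH H2.
by rewrite addSnnS.
Qed.

Lemma L_rw1 x p : forall i bs ph w c, p <= w ->
  P1 c (inr Rw1) i bs ph w (Z.of_nat p - 1) -> P1 (iter p.+1 (step x) c) (inr Rw2) (i - 1) bs ph w 0.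
Proof.
elim: p => [|p IH] i bs ph w c Hp H.
  have Hr : mark w (Z.of_nat 0 - 1) = Sb by apply: mark_neg; lia.
  apply: (P1_step H); first by rewrite Hr.
  all: fin.
rewrite iterSr; apply: IH; first exact: ltnW.
have E : (Z.of_nat p.+1 - 1 = Z.of_nat p)%Z by lia.
rewrite E in H.
have Hr : mark w (Z.of_nat p) = S1 by rewrite markN Hp.
apply: (P1_step H); first by rewrite Hr.
all: fin.
Qed.

Lemma L_rw2 x p : forall bs ph w mh c, p <= size x ->
  P1 c (inr Rw2) (Z.of_nat p - 1) bs ph w mh -> P1 (iter p.+1 (step x) c) (inl (tm_q0 M)) 0 bs ph w mh.
Proof.
elim: p => [|p IH] bs ph w mh c Hp H.
  have Hr : read_input x (Z.of_nat 0 - 1) = Sb by apply: read_neg; lia.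
  apply: (P1_step H); first by rewrite Hr.
  all: fin.
rewrite iterSr; apply: IH; first exact: ltnW.
have E : (Z.of_nat p.+1 - 1 = Z.of_nat p)%Z by lia.
rewrite E in H.
have Hr : read_input x (Z.of_nat p) = bit (nth false x p) by rewrite readN Hp.
by case: (nth false x p) Hr => Hr; (apply: (P1_step H); first by rewrite Hr); fin.
Qed.

Lemma read_take m x z : read_input (take m x) z = if mark m z is S1 then read_input x z else Sb.
Proof.
case: (Zcases z) => [Hz|[t ->]]; first by rewrite mark_neg // read_neg.
rewrite !readN markN size_take_min.
case: (ltnP t m) => Htm.
  by rewrite nth_take // leq_min Htm.
have -> : t < minn m (size x) = false by apply/negbTE; rewrite -leqNgt; apply: leq_trans (geq_minl _ _) Htm.
by [].
Qed.

Definition corr (m : nat) (c : conf M) (c' : conf Mp) :=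
  c_q c' = inl (c_q c) /\ c_ih c' = c_ih c /\ c_wh c' MT = c_ih c /\
  (forall z, c_tape c' MT z = mark m z) /\
  (forall i, c_wh c' (MI i) = c_wh c i /\ forall z, c_tape c' (MI i) z = c_tape c i z).

Lemma halted_inl (q : tm_Q M) : @halted Mp (inl q) = halted q.
Proof. by []. Qed.

Lemma sim_step m x c c' : corr m c c' -> corr m (step (take m x) c) (step x c').
Proof.
move=> [Hq [Hi [HMh [HM Hcl]]]].
case Hh: (halted (c_q c)).
  have Hh' : halted (c_q c') by rewrite Hq halted_inl.
  by rewrite /step Hh Hh'.
case E: (tm_delta (c_q c) (read_input (take m x) (c_ih c)) [tuple c_tape c i (c_wh c i) | i < k]) => [[q2 d] wr].
rewrite (step_nh Hh E).
set T := [tuple c_tape c' i (c_wh c' i) | i < k.+2].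
have Hh' : halted (c_q c') = false by rewrite Hq halted_inl.
have E' : tm_delta (c_q c') (read_input x (c_ih c')) T =
   (inl q2, d, [tuple sel3 (c_tape c' CT (c_wh c' CT), MoveS) (mark m (c_ih c), d) (tnth wr) i | i < k.+2]).
  rewrite Hq /= /delta' /T !tnth_mktuple HMh HM Hi -read_take.
  have -> : [tuple tnth [tuple c_tape c' i (c_wh c' i) | i < k.+2] (MI i) | i < k] = [tuple c_tape c i (c_wh c i) | i < k].
    apply: eq_from_tnth => i; rewrite !tnth_mktuple.
    by have [-> ->] := Hcl i.
  by rewrite E.
rewrite (step_nh Hh' E') /corr /= !tnth_mktuple sel3_MT.
split=> //; split; first by rewrite Hi.
split; first by rewrite HMh.
split; first by move=> z; rewrite HMh HM; apply: wsame'.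
move=> i; rewrite !tnth_mktuple sel3_MI; have [H1 H2] := Hcl i; split; first by rewrite H1.
by move=> z; rewrite H1 H2.
Qed.

Lemma sim_iter m x c c' t : corr m c c' ->
  corr m (iter t (step (take m x)) c) (iter t (step x) c').
Proof. by move=> H; elim: t => //= t IH; apply: sim_step. Qed.

Definition bl n := size (iter n incr [::]).
Definition gpad (g : seq bool -> bool) x := g (take (j * bl (size x)) x).

Lemma Mp_decides g C a : decides_within M g (fun n => C * 2 ^ (a * n)) ->
  decides_within Mp (gpad g) (fun n => n * (2 * n + 7) + 1 + ((bl n) * (j+2)).+1 + (j * bl n).+1 + n.+1
       + C * 2 ^ (a * (j * bl n))).
Proof.
move=> HM x.
set n := size x; set B := iter n incr [::]; set m := j * bl n.
have H0 : P1 (init_conf Mp) (inr Scan) (Z.of_nat 0) (iter 0 incr [::]) 0 0 0.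
  split=> //; split=> //; split.
    by move=> z; rewrite /read_input /=; case: Z.leb_spec; case: Z.ltb_spec => //; lia.
  split=> //; split.
    by move=> z; rewrite /mark /=; case: Z.leb_spec; case: Z.ltb_spec => //; lia.
  by split.
have [t1 [Ht1 H1]] := L_scan (x:=x) (add0n n) H0.
have H1' : P1 (iter t1 (step x) (init_conf Mp)) (inr Chk) (Z.of_nat n) B (Z.of_nat 0) (j * 0) (Z.of_nat (j * 0)).
  by rewrite muln0.
have H2 := L_copy x (add0n (size B)) H1'.
have H3 := L_rw1 x (leqnn m) H2.
have H4 := L_rw2 (leqnn n) H3.
set c4 := iter n.+1 (step x) _ in H4.
have Hc : corr m (init_conf M) c4.
  have [Hq [Hi [_ [_ [HM4 [HMh Hcl]]]]]] := H4.
  split; first by [].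
  split; first by [].
  split; first by [].
  split; first by [].
  move=> i; have [-> H] := Hcl i; split=> //.
have [t [Ht Hrun]] := HM (take m x).
have Hs := sim_iter x t Hc.
exists (t + (n.+1 + (m.+1 + ((size B * (j + 2)).+1 + t1)))); split.
  have Hy : size (take m x) <= m by rewrite size_take_min geq_minl.
  have : C * 2 ^ (a * size (take m x)) <= C * 2 ^ (a * m).
    by apply: leq_mul => //; apply: leq_pexp2l => //; apply: leq_mul.
  rewrite /bl -/B -/m; lia.
rewrite /run !iterD.
case: Hs => [Hq _]; rewrite -/c4 Hq /run in Hrun *; rewrite Hrun /gpad -/n -/m.
by case: (g (take m x)).
Qed.
End Pad.

Fixpoint valb (s : seq bool) : nat := if s is b :: s' then b + 2 * valb s' else 0.
Definition good (s : seq bool) := if s is b :: s' then last b s' else true.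

Lemma valb_incr s : valb (incr s) = (valb s).+1.
Proof. elim: s => //= [[]] s IH /=; rewrite ?IH; lia. Qed.
Lemma valb_lt s : valb s < 2 ^ size s.
Proof. elim: s => //= b s IH; rewrite expnS; case: b => /=; lia. Qed.
Lemma incr_nil s : incr s <> [::].
Proof. by case: s => [|[] s]. Qed.
Lemma good_incr s : good s -> good (incr s).
Proof.
elim: s => //= b s IH; case: b => /=.
  move=> Hs; have Hg : good s by case: s Hs IH.
  have := IH Hg; have := @incr_nil s; case: (incr s) => //.
by case: s IH.
Qed.
Lemma good_low s : good s -> s <> [::] -> 2 ^ (size s).-1 <= valb s.
Proof.
elim: s => //= b s IH Hg _.
case: s IH Hg => [|b' s] IH Hg; first by move: Hg => /= ->.
have := IH Hg (fun H => ltac:(discriminate H)); rewrite /= expnS; lia.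
Qed.

Lemma iter_incr_val n : valb (iter n incr [::]) = n.
Proof. by elim: n => //= n IH; rewrite valb_incr IH. Qed.
Lemma iter_incr_good n : good (iter n incr [::]).
Proof. by elim: n => //= n IH; apply: good_incr. Qed.

Lemma bl_up n : n < 2 ^ bl n.
Proof. by have := valb_lt (iter n incr [::]); rewrite iter_incr_val. Qed.
Lemma bl_low n : 0 < n -> 2 ^ (bl n).-1 <= n.
Proof.
case: n => // n _; rewrite -{2}(iter_incr_val n.+1); apply: good_low; first exact: iter_incr_good.
exact: incr_nil.
Qed.
Lemma bl_pos n : 0 < n -> 0 < bl n.
Proof. by case: n => // n _; rewrite /bl /=; case: (incr _) (@incr_nil (iter n incr [::])). Qed.
Lemma bl_2 n : 2 ^ bl n <= n.*2.+1.
Proof.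
case: n => [|n]; first by [].
have H := bl_low (ltn0Sn n); have Hp := bl_pos (ltn0Sn n).
rewrite -(prednK Hp) expnS; lia.
Qed.
Lemma bl_le n : bl n <= n.
Proof.
case: n => [|n]; first by [].
have H := bl_low (ltn0Sn n); have Hp := bl_pos (ltn0Sn n).
have := ltn_expl (bl n.+1).-1 (isT : 1 < 2); lia.
Qed.

Lemma jL_small j : exists L0, forall L, L0 <= L -> j * L <= 2 ^ L.-1.
Proof.
exists (4 * j).+1 => L HL.
set u := L.-1; set v := u./2.
have Hu : 4 * j <= u by rewrite /u; lia.
have Huv := odd_double_half u; rewrite -/v in Huv.
have Hv : 2 * j <= v by move: Huv; case: (odd u) => /=; lia.
have H1 : v < 2 ^ v := ltn_expl v (isT : 1 < 2).
have H2 : 2 ^ (v + v) <= 2 ^ u by apply: leq_pexp2l => //; move: Huv; case: (odd u) => /=; lia.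
rewrite expnD in H2.
have E : L = u.+1 by rewrite /u; lia.
rewrite E; nia.
Qed.

Lemma leq_expn_base m n e : m <= n -> m ^ e <= n ^ e.
Proof. by move=> H; elim: e => // e IH; rewrite !expnS leq_mul. Qed.

Lemma T_bound j C a : exists D, forall n,
  n * (2 * n + 7) + 1 + ((bl n) * (j+2)).+1 + (j * bl n).+1 + n.+1 + C * 2 ^ (a * (j * bl n))
  <= D * n ^ (2 + a * j) + D.
Proof.
set K3 := 3 ^ (a * j).
exists (9 + (j + 2) + j + 1 + C * K3 + C + 4) => n.
case: n => [|n].
  rewrite /bl /= !muln0 expn0; lia.
set N := n.+1; set L := bl N; set X := N ^ (2 + a * j).
have Hn : 0 < N by [].
have HL : L <= N := bl_le N.
have HX : N * N <= X by rewrite mulnn; apply: leq_pexp2l => //; rewrite leq_addr.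
have HP : 2 ^ (a * (j * L)) <= K3 * X.
  have -> : a * (j * L) = L * (a * j) by rewrite mulnA mulnC.
  rewrite expnM.
  have H1 : (2 ^ L) ^ (a * j) <= (3 * N) ^ (a * j).
    apply: leq_expn_base; have := bl_2 N; rewrite -/L; lia.
  apply: (leq_trans H1); rewrite expnMn /K3 leq_mul2l; apply/orP; right.
  by apply: leq_pexp2l => //; rewrite leq_addl.
have A5 : N <= X by apply: leq_trans HX; rewrite leq_pmull.
have A1 : N * (2 * N + 7) <= 9 * X by nia.
have A2 : L * (j + 2) <= (j + 2) * X by nia.
have A3 : j * L <= j * X by nia.
have A4 : C * 2 ^ (a * (j * L)) <= (C * K3) * X by rewrite -mulnA leq_mul2l HP orbT.
nia.
Qed.

Definition trg (m : nat) (g : gate) : gate :=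
  match g with GIn k => GIn (if k < m then k else 0) | _ => g end.

Lemma foldl_trg (x y : seq bool) m (C : seq gate) vals :
  (forall g, List.In g C -> forall vals, eval_gate y vals (trg m g) = eval_gate x vals g) ->
  foldl (fun vals g => rcons vals (eval_gate y vals g)) vals (map (trg m) C) =
  foldl (fun vals g => rcons vals (eval_gate x vals g)) vals C.
Proof.
elim: C vals => //= g C IH vals H.
rewrite H /=; last by left.
by rewrite IH // => g' Hg'; apply: H; right.
Qed.

Lemma In_nth_ssr (g : gate) C : List.In g C -> exists2 i, i < size C & nth (GIn 0) C i = g.
Proof.
elim: C => //= g0 C IH [->|H]; first by exists 0.
by have [i Hi E] := IH H; exists i.+1.
Qed.

Lemma wf_gin n C g : circuit_wf n C -> List.In g C -> forall k, g = GIn k -> k < n.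
Proof.
move=> /and3P [_ Hok _] Hg k Ek.
have [i Hi Ei] := In_nth_ssr Hg.
have := allP Hok i; rewrite mem_iota add0n Hi Ei Ek.
by move=> /(_ isT).
Qed.

Lemma reduce n m (C : seq gate) (f : n.-tuple bool -> bool) (h : m.-tuple bool -> bool) :
  0 < m ->
  (forall y : m.-tuple bool, exists x : n.-tuple bool, f x = h y /\
      forall k, k < n -> nth false x k = nth false y (if k < m then k else 0)) ->
  circuit_computes C f -> circuit_computes (map (trg m) C) h.
Proof.
move=> Hm Hext [Hwf Hc]; split.
  move: (Hwf) => /and3P [Hs Hok Hrf]; apply/and3P; split; first by rewrite size_map.
    apply/allP => i; rewrite size_map mem_iota add0n => /andP [_ Hi].
    rewrite (nth_map (GIn 0)) //.
    have := allP Hok i; rewrite mem_iota add0n Hi => /(_ isT).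
    by case: (nth (GIn 0) C i) => //= k _; case: ifP.
  apply/allP => i; rewrite size_map => Hi.
  have := allP Hrf i Hi => /hasP [j' Hj' Hr]; apply/hasP; exists j'; first by rewrite ?size_map.
  move: Hj'; rewrite mem_iota add0n => /andP [_ Hj'].
  by rewrite (nth_map (GIn 0)) //; case: (nth (GIn 0) C j') Hr.
move=> y; have [x [Hfx Hx]] := Hext y.
rewrite -Hfx -Hc /circ_out /circ_vals (foldl_trg (x := x)) //.
move=> g Hg vals; case: g Hg => //= k Hg.
by rewrite Hx //; apply: (wf_gin Hwf Hg).
Qed.

Inductive form := FIn of nat | FAnd of form & form | FOr of form & form | FNot of form.

Fixpoint evalF (x : seq bool) (f : form) : bool :=
  match f with
  | FIn k => nth false x k
  | FAnd a b => evalF x a && evalF x b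
  | FOr a b => evalF x a || evalF x b
  | FNot a => ~~ evalF x a
  end.

Fixpoint scoped n (f : form) : bool :=
  match f with
  | FIn k => k < n
  | FAnd a b | FOr a b => scoped n a && scoped n b
  | FNot a => scoped n a
  end.

Fixpoint comp (f : form) (o : nat) : seq gate :=
  match f with
  | FIn k => [:: GIn k]
  | FNot a => let la := comp a o in la ++ [:: GNot (o + size la).-1]
  | FAnd a b => let la := comp a o in let lb := comp b (o + size la) in
                la ++ lb ++ [:: GAnd (o + size la).-1 (o + size la + size lb).-1]
  | FOr a b => let la := comp a o in let lb := comp b (o + size la) in
                la ++ lb ++ [:: GOr (o + size la).-1 (o + size la + size lb).-1]
  end.

Lemma comp_pos f o : 0 < size (comp f o).
Proof. by case: f => [k|a b|a b|a] //=; rewrite !size_cat /= !addnS. Qed.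

Definition closed n o (l : seq gate) :=
  (forall i, i < size l -> gate_ok n (o + i) (nth (GIn 0) l i)) /\
  (forall i, i < (size l).-1 -> exists2 j, j < size l & refs (o + i) (nth (GIn 0) l j)).

Lemma closed1 n o g : gate_ok n o g -> closed n o [:: g].
Proof. by move=> H; split=> [[|i]|i] //; rewrite addn0. Qed.

Lemma closed_app n o la lb : 0 < size la -> closed n o la -> closed n (o + size la) lb ->
  (exists2 j, j < size lb & refs (o + (size la).-1) (nth (GIn 0) lb j)) ->
  closed n o (la ++ lb).
Proof.
move=> Hla [A1 A2] [B1 B2] [jr Hjr Hr]; split.
  move=> i; rewrite size_cat nth_cat => Hi; case: ltnP => Hil; first exact: A1.
  have := B1 (i - size la); rewrite -addnA subnKC //; apply; lia.
move=> i; rewrite size_cat => Hi.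
case: (ltnP i (size la).-1) => H1.
  have [j' Hj' Hr'] := A2 i H1; exists j'; first by lia.
  by rewrite nth_cat Hj'.
case: (ltnP i (size la)) => H2.
  have Ei : i = (size la).-1 by lia.
  exists (size la + jr); first by rewrite ltn_add2l.
  by rewrite nth_cat ltnNge leq_addr /= addKn Ei.
have [j' Hj' Hr'] := B2 (i - size la) (ltac:(lia)).
exists (size la + j'); first by rewrite ltn_add2l.
by rewrite nth_cat ltnNge leq_addr /= addKn; move: Hr'; rewrite -addnA subnKC.
Qed.

Lemma comp_closed n f o : scoped n f -> closed n o (comp f o).
Proof.
elim: f o => [k|a IHa b IHb|a IHa b IHb|a IHa] o /=.
- by move=> Hk; apply: closed1; rewrite /= Hk.
- move=> /andP [Ha Hb].
  have Pa := comp_pos a o; have Pb := comp_pos b (o + size (comp a o)).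
  apply: closed_app => //; first exact: IHa.
  + apply: closed_app => //; first exact: IHb.
    * by apply: closed1; rewrite /=; apply/andP; split; lia.
    * by exists 0 => //=; apply/orP; right; apply/eqP; lia.
  + exists (size (comp b (o + size (comp a o)))); first by rewrite size_cat /= addn1.
    by rewrite nth_cat ltnn subnn /=; apply/orP; left; apply/eqP; lia.
- move=> /andP [Ha Hb].
  have Pa := comp_pos a o; have Pb := comp_pos b (o + size (comp a o)).
  apply: closed_app => //; first exact: IHa.
  + apply: closed_app => //; first exact: IHb.
    * by apply: closed1; rewrite /=; apply/andP; split; lia.
    * by exists 0 => //=; apply/orP; right; apply/eqP; lia.
  + exists (size (comp b (o + size (comp a o)))); first by rewrite size_cat /= addn1.
    by rewrite nth_cat ltnn subnn /=; apply/orP; left; apply/eqP; lia.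
- move=> Ha; have Pa := comp_pos a o.
  apply: closed_app => //; first exact: IHa.
  + by apply: closed1; rewrite /=; lia.
  + by exists 0 => //=; apply/eqP; lia.
Qed.

Definition FF (x : seq bool) := fun vals g => rcons vals (eval_gate x vals g).

Lemma last_cat_ne (s1 s2 : seq bool) z1 z2 : 0 < size s2 -> last z1 (s1 ++ s2) = last z2 s2.
Proof. by rewrite last_cat; case: s2. Qed.

Lemma nth_last_cat (s : seq bool) : 0 < size s -> nth false s (size s).-1 = last false s.
Proof. by move=> _; rewrite nth_last. Qed.

Lemma comp_eval x f : forall o vals, size vals = o ->
  exists2 vs, foldl (FF x) vals (comp f o) = vals ++ vs &
     (size vs = size (comp f o) /\ last false vs = evalF x f).
Proof.
elim: f => [k|a IHa b IHb|a IHa b IHb|a IHa] o vals Hs /=.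
- by exists [:: nth false x k]; rewrite ?cats1.
- have [vsa Ea [Sa La]] := IHa o vals Hs.
  have Pa := comp_pos a o.
  have Pa' : 0 < size vsa by rewrite Sa.
  have Hs1 : size (vals ++ vsa) = o + size (comp a o) by rewrite size_cat Hs Sa.
  have [vsb Eb [Sb Lb]] := IHb _ _ Hs1.
  have Pb := comp_pos b (o + size (comp a o)).
  have Pb' : 0 < size vsb by rewrite Sb.
  rewrite !foldl_cat Ea Eb /= /FF /=.
  set z := (_ && _).
  exists (rcons (vsa ++ vsb) z); first by rewrite -rcons_cat catA.
  split; first by rewrite size_rcons !size_cat Sa Sb /=; lia.
  rewrite last_rcons /z; congr (_ && _).
    rewrite nth_cat size_cat Hs Sa ifT; last by lia.
    have Hs2 : (o + size (comp a o)).-1 = (size (vals ++ vsa)).-1 by rewrite size_cat Hs Sa.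
    by rewrite Hs2 nth_last (last_cat_ne _ _ false Pa') La.
  have -> : (o + size (comp a o) + size (comp b (o + size (comp a o)))).-1 = (size ((vals ++ vsa) ++ vsb)).-1.
    by rewrite size_cat Hs1 Sb.
  by rewrite nth_last (last_cat_ne _ _ false Pb') Lb.
- have [vsa Ea [Sa La]] := IHa o vals Hs.
  have Pa := comp_pos a o.
  have Pa' : 0 < size vsa by rewrite Sa.
  have Hs1 : size (vals ++ vsa) = o + size (comp a o) by rewrite size_cat Hs Sa.
  have [vsb Eb [Sb Lb]] := IHb _ _ Hs1.
  have Pb := comp_pos b (o + size (comp a o)).
  have Pb' : 0 < size vsb by rewrite Sb.
  rewrite !foldl_cat Ea Eb /= /FF /=.
  set z := (_ || _).
  exists (rcons (vsa ++ vsb) z); first by rewrite -rcons_cat catA.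
  split; first by rewrite size_rcons !size_cat Sa Sb /=; lia.
  rewrite last_rcons /z; congr (_ || _).
    rewrite nth_cat size_cat Hs Sa ifT; last by lia.
    have Hs2 : (o + size (comp a o)).-1 = (size (vals ++ vsa)).-1 by rewrite size_cat Hs Sa.
    by rewrite Hs2 nth_last (last_cat_ne _ _ false Pa') La.
  have -> : (o + size (comp a o) + size (comp b (o + size (comp a o)))).-1 = (size ((vals ++ vsa) ++ vsb)).-1.
    by rewrite size_cat Hs1 Sb.
  by rewrite nth_last (last_cat_ne _ _ false Pb') Lb.
- have [vsa Ea [Sa La]] := IHa o vals Hs.
  have Pa := comp_pos a o.
  have Pa' : 0 < size vsa by rewrite Sa.
  rewrite !foldl_cat Ea /= /FF /=.
  set z := (~~ _).
  exists (rcons vsa z); first by rewrite -rcons_cat.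
  split; first by rewrite size_rcons size_cat Sa /=; lia.
  have Hs1 : (o + size (comp a o)).-1 = (size (vals ++ vsa)).-1 by rewrite size_cat Hs Sa.
  by rewrite last_rcons /z Hs1 nth_last (last_cat_ne _ _ false Pa') La.
Qed.

Definition TRUEf := FOr (FIn 0) (FNot (FIn 0)).
Definition FALSEf := FAnd (FIn 0) (FNot (FIn 0)).
Definition lit i (b : bool) := if b then FIn i else FNot (FIn i).
Definition mtf n (y : seq bool) := foldr (fun i acc => FAnd (lit i (nth false y i)) acc) TRUEf (iota 0 n).
Definition dnf n (ys : seq (seq bool)) := foldr (fun y acc => FOr (mtf n y) acc) FALSEf ys.

Lemma eval_mt n x y : evalF x (mtf n y) = all (fun i => nth false x i == nth false y i) (iota 0 n).
Proof.
rewrite /mtf; elim: (iota 0 n) => /= [|i s ->]; first by case: (nth false x 0).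
by rewrite /lit; case: (nth false y i) => /=; case: (nth false x i).
Qed.

Lemma eval_dnf n x ys : evalF x (dnf n ys) = has (fun y => evalF x (mtf n y)) ys.
Proof.
elim: ys => /= [|y ys ->]; last by [].
by case: (nth false x 0).
Qed.

Lemma scoped_dnf n ys : 0 < n -> scoped n (dnf n ys).
Proof.
move=> Hn; elim: ys => /= [|y ys ->]; first by rewrite Hn.
rewrite andbT /mtf.
have : all (fun i => i < n) (iota 0 n) by apply/allP => i; rewrite mem_iota.
elim: (iota 0 n) => /= [|i s IH /andP [Hi Hs]]; first by rewrite Hn.
by rewrite IH // andbT /lit; case: (nth false y i) => /=.
Qed.

Lemma tuple_all_eq n (x y : n.-tuple bool) :
  all (fun i => nth false x i == nth false y i) (iota 0 n) = (x == y).
Proof.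
apply/allP/eqP => [H|->]; last by move=> i _.
apply: val_inj; apply: (@eq_from_nth _ false); first by rewrite !size_tuple.
move=> i; rewrite size_tuple => Hi; apply/eqP/H; by rewrite mem_iota add0n Hi.
Qed.

Lemma circ_exists n (f : n.-tuple bool -> bool) : 0 < n -> exists C, circuit_computes C f.
Proof.
move=> Hn.
set ys := map (@tval n bool) [seq y <- enum {: n.-tuple bool} | f y].
exists (comp (dnf n ys) 0); split.
  have [A1 A2] := comp_closed 0 (scoped_dnf ys Hn).
  apply/and3P; split; first exact: comp_pos.
    by apply/allP => i; rewrite mem_iota add0n => /andP [_ Hi]; exact: A1.
  apply/allP => i; rewrite mem_iota add0n => /andP [_ Hi].
  have [j' Hj' Hr] := A2 i Hi; apply/hasP; exists j' => //; by rewrite mem_iota add0n Hj'.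
move=> x.
have [vs E [_ L]] := comp_eval x (dnf n ys) (erefl (size ([::] : seq bool))).
rewrite /circ_out /circ_vals -/(FF x) E /= L eval_dnf /ys has_map.
rewrite (@eq_has _ _ (pred1 x)); last by move=> y /=; rewrite eval_mt tuple_all_eq eq_sym.
by rewrite has_pred1 mem_filter mem_enum andbT.
Qed.

Lemma ex_min (P : nat -> Prop) : (exists k, P k) -> exists k, P k /\ forall j, P j -> k <= j.
Proof.
move=> [k Hk]; elim/ltn_ind: k Hk => k IH Hk.
case: (classic (exists j, P j /\ j < k)) => [[j' [Hj Hlt]]|Hno]; first exact: IH j' Hlt Hj.
exists k; split=> // j Hj; rewrite leqNgt; apply/negP => Hlt; apply: Hno; by exists j.
Qed.

Lemma nmin_some P k : nmin P = Some k -> P k /\ forall j, P j -> k <= j.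
Proof.
rewrite /nmin; case: excluded_middle_informative => // Hex [<-].
apply: (epsilon_spec (inhabits 0) (fun k => P k /\ forall j, P j -> k <= j)); exact: ex_min.
Qed.

Lemma nmin_ex P : (exists k, P k) -> exists k, nmin P = Some k.
Proof. rewrite /nmin => H; case: excluded_middle_informative => // _; by eexists. Qed.

Lemma big_Rmax_ge (T : finType) (P : pred T) (F : T -> R) f :
  P f -> Rle (F f) (\big[Rmax/R0]_(i | P i) F i).
Proof.
move=> Hf.
suff H : forall r, f \in r -> Rle (F f) (\big[Rmax/R0]_(i <- r | P i) F i).
  exact: H (mem_index_enum f).
elim=> [|a r IH] //; rewrite inE => /orP [/eqP <-|Hr]; rewrite big_cons.
  by rewrite Hf; apply: Rmax_l.
case: (P a); last exact: IH.
by apply: Rle_trans (IH Hr) (Rmax_r _ _).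
Qed.

Lemma decides_mono (M : TM) g (T T' : nat -> nat) :
  decides_within M g T -> (forall n, T n <= T' n) -> decides_within M g T'.
Proof.
move=> H HT x; have [t [Ht Hq]] := H x; exists t; split => //.
exact: leq_trans Ht (HT _).
Qed.

Lemma INR_expn2 L : INR (2 ^ L) = pow (INR 2) L.
Proof. by elim: L => [|L IH] //; rewrite expnS mult_INR IH. Qed.

Lemma leINR m n : m <= n -> Rle (INR m) (INR n).
Proof. by move=> /leP; apply: le_INR. Qed.

Theorem mainTheorem15
  (U : nat -> interpreter)
  (HUsim : forall (c c' : nat) (M : TM) (g : seq bool -> bool),
      0 < c -> c' < c -> computes_in_poly_time M g c' ->
      exists (h : seq bool) (N : nat),
        forall x : seq bool, N <= size x -> U c h x = Some (g x))
  (HUlen : forall (c : nat) (p x : seq bool), U c p x <> None -> 2 <= size p) :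
  (exists g : seq bool -> bool, in_E g /\
     exists io : R, Rlt R0 io /\
       forall (n : nat) (C : seq gate), 1 <= n ->
         circuit_computes C (@restr g n) ->
         Rle (Rpower (INR 2) (Rmult io (INR n))) (INR (size C))) ->
  forall gamma : R, Rlt R0 gamma ->
    exists c : nat, 0 < c /\
      exists K : R, Rlt R0 K /\
        exists N : nat, forall n : nat, N <= n ->
          Rle (Rmult K (Rpower (INR n) (Rplus R1 gamma))) (sup_ratio (U c) n).
Proof.
move=> [g [[M [C [a HM]]] [io [Hio Hlb]]]] gamma Hgam.
have [j0 Hj0] := INR_unbounded (Rdiv (Rplus 1 gamma) io).
set j := j0.+1.
have Hj : Rle (Rplus 1 gamma) (Rmult io (INR j)).
  have E : Rplus 1 gamma = Rmult io (Rdiv (Rplus 1 gamma) io) by field; lra.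
  rewrite {1}E /j S_INR; apply: Rlt_le; apply: Rmult_lt_compat_l => //; lra.
set c' := 2 + a * j.
have [D HD] := T_bound j C a.
have Hpoly : computes_in_poly_time (Mp M j) (gpad j g) c'.
  by exists D; apply: decides_mono (Mp_decides j HM) HD.
have [h [N0 Hh]] := HUsim c'.+1 c' (Mp M j) (gpad j g) (ltn0Sn _) (ltnSn _) Hpoly.
set c := c'.+1.
have Hh2 : 2 <= size h.
  by apply: (HUlen c h (nseq N0 false)); rewrite Hh ?size_nseq.
have [L0 HL0] := jL_small j.
exists c; split => //.
exists (Rinv (INR (size h))); split.
  by apply: Rinv_0_lt_compat; apply: lt_0_INR; apply/ltP; apply: leq_trans _ Hh2.
exists (maxn N0 (2 ^ L0).+1) => n; rewrite geq_max => /andP [HN0 HnL].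
have Hn1 : 0 < n by apply: leq_trans HnL.
set L := bl n; set m := j * L.
have HLL : L0 < L.
  by rewrite -(ltn_exp2l _ _ (isT : 1 < 2)); exact: ltn_trans HnL (bl_up n).
have Hm1 : 0 < m by rewrite /m muln_gt0; apply/andP; split => //; apply: leq_ltn_trans HLL.
have Hmn : m <= n by apply: leq_trans (HL0 L (ltnW HLL)) (bl_low Hn1).
set f : H n := [ffun x : n.-tuple bool => gpad j g x].
have [kI EI] : exists kI, compI (U c) f = Some kI.
  apply: nmin_ex; exists (size h), h; split => // x.
  by rewrite ffunE Hh // size_tuple.
have [[h' [Hh' Hh'x]] HkImin] := nmin_some EI.
have HkI2 : 2 <= kI.
  rewrite -Hh'; apply: (HUlen c h' [tuple false | _ < n]).
  by rewrite Hh'x.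
have HkIh : kI <= size h.
  apply: HkImin; exists h; split => // x.
  by rewrite ffunE Hh // size_tuple.
have [C0 HC0] := circ_exists f Hn1.
have [kC EC] : exists kC, compC f = Some kC.
  by apply: nmin_ex; exists (circ_len (size C0) n), C0.
have [[C1 [HC1 EkC]] _] := nmin_some EC.
have HC1' : circuit_computes (map (trg m) C1) (@restr g m).
  apply: (reduce Hm1 _ HC1) => y.
  have Hsz : size (tval y ++ nseq (n - m) (nth false y 0)) == n.
    by rewrite size_cat size_tuple size_nseq subnKC.
  exists (Tuple Hsz); split.
    rewrite ffunE /gpad /restr /= (eqP Hsz) -/L -/m take_size_cat //.
    by rewrite size_tuple.
  move=> k Hk /=; rewrite nth_cat size_tuple.
  case: ltnP => Hkm //; rewrite nth_nseq ifT //.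
  by rewrite ltn_sub2r // (leq_ltn_trans Hkm Hk).
have Hlow := Hlb m _ Hm1 HC1'.
rewrite size_map in Hlow.
have Hsup : Rle (Rdiv (INR kC) (INR kI)) (sup_ratio (U c) n).
  have := @big_Rmax_ge _ (fun f0 : H n => isSome (compI (U c) f0))
            (fun f0 => Rdiv (INR (odflt 0%N (compC f0))) (INR (odflt 0%N (compI (U c) f0)))) f.
  by rewrite EI EC /=; apply.
apply: Rle_trans Hsup.
have HkIpos : Rlt 0 (INR kI) by apply: lt_0_INR; apply/ltP; apply: leq_trans _ HkI2.
have HhkI : Rle (Rinv (INR (size h))) (Rinv (INR kI)).
  by apply: Rinv_le_contravar => //; apply: leINR.
have HCl : Rle (INR (size C1)) (INR kC).
  rewrite EkC; apply: leINR; rewrite /circ_len.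
  have : size C1 <= size C1 * (3 + maxn (2 * up_log 2 (size C1)) (up_log 2 n)) by rewrite leq_pmulr.
  lia.
have H2L : Rle (INR n) (Rpower (INR 2) (INR L)).
  rewrite Rpower_pow; last by simpl; lra.
  rewrite -INR_expn2; apply: leINR; apply: ltnW; exact: bl_up.
have Hnpos : Rlt 0 (INR n) by apply: lt_0_INR; apply/ltP.
have HP : Rle (Rpower (INR n) (Rplus R1 gamma)) (Rpower (INR 2) (Rmult io (INR m))).
  have H1 : Rle (Rpower (INR n) (Rplus R1 gamma)) (Rpower (Rpower (INR 2) (INR L)) (Rplus R1 gamma)).
    by apply: Rle_Rpower_l; [lra | split].
  apply: (Rle_trans _ _ _ H1).
  rewrite Rpower_mult; apply: Rle_Rpower; first by simpl; lra.
  rewrite /m mult_INR.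
  have HL : Rle 0 (INR L) by apply: pos_INR.
  nra.
have Hpow_pos : Rle 0 (Rpower (INR n) (Rplus R1 gamma)) by apply: Rlt_le; apply: exp_pos.
rewrite /Rdiv (Rmult_comm (INR kC)).
apply: Rle_trans (Rmult_le_compat_r _ _ _ Hpow_pos HhkI) _.
apply: Rmult_le_compat_l; first by apply: Rlt_le; apply: Rinv_0_lt_compat.
lra.
Qed.
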